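(* Let $C>0$, $L>0$, $R\neq 0$, $\mu\in\mathbb{R}$, $h>0$ and let $\hat q:\mathbb{R}\to\mathbb{R}$ be any function. Suppose real sequences $v_{C,k},i_{C,k},i_{L,k},v_{L,k},v_{R,k},i_{R,k},v_{M,k},i_{M,k},\varphi_{M,k}$, $k=0,1,2,\dots$, satisfy for all $k$: $$i_{C,k}=C\frac{v_{C,k+1}-v_{C,k}}{h},\quad v_{L,k}=L\frac{i_{L,k+1}-i_{L,k}}{h},\quad v_{R,k}=Ri_{R,k},$$ $$i_{M,k}=\frac{\hat q(\varphi_{M,k+1})-\hat q(\varphi_{M,k})}{h},\quad \varphi_{M,k+1}=\varphi_{M,k}+hv_{M,k},$$ $$i_{L,k}=i_{M,k}+i_{C,k},\quad i_{L,k}=i_{R,k},\quad v_{C,k}+v_{R,k}+v_{L,k}-\mu v_{C,k}=0,\quad v_{C,k}=v_{M,k}.$$ Then: 1) $(v_{C,k},i_{L,k},\varphi_{M,k})$ is an orbit of the three-dimensional map $$\begin{aligned} v_{C,k+1}&=v_{C,k}-\tfrac{1}{C}\big(\hat q(\varphi_{M,k}+hv_{C,k})-\hat q(\varphi_{M,k})\big)+\tfrac{h}{C}i_{L,k},\\ i_{L,k+1}&=\big(1-\tfrac{Rh}{L}\big)i_{L,k}+\tfrac{h}{L}(\mu-1)v_{C,k},\\ \varphi_{M,k+1}&=\varphi_{M,k}+hv_{C,k}.\end{aligned}$$ 2) For any step size $h>0$, the function $\Theta_{MLC}(v_C,i_L,\varphi_M)=Cv_C+\frac{Li_L}{R}+\hat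 q(\varphi_M)+\frac{1-\mu}{R}\varphi_M$ is a first integral of this map, i.e. it takes the same value at $k+1$ as at $k$ for all $k\ge0$ along every orbit. 3) Consequently $\mathbb{R}^3$ is foliated into the invariant sets $\mathcal{M}_{MLC}(Q_0)=\{(v_C,i_L,\varphi_M)\in\mathbb{R}^3:\Theta_{MLC}(v_C,i_L,\varphi_M)=Q_0\}$, $Q_0\in\mathbb{R}$, and along any orbit of the map lying in $\mathcal{M}_{MLC}(Q_0)$, setting $q^0_{L,k}=h\sum_{j=0}^{k-1}i_{L,j}$ and $y_k=q^0_{L,k}+\frac{\mu-1}{R}\varphi_{M,0}-\frac{L}{R}i_{L,0}$, the pair $(\varphi_{M,k},y_k)$ obeys the two-dimensional map $$\varphi_{M,k+1}=\varphi_{M,k}+\tfrac{h}{C}y_k-\tfrac{h}{C}\hat q(\varphi_{M,k})+\tfrac{h}{C}Q_0,\qquad y_{k+1}=\big(1-\tfrac{hR}{L}\big)y_k+\tfrac{h}{L}(\mu-1)\varphi_{M,k}.$$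
   Context: These equations model a discrete-time memristor Murali-Lakshmanan-Chua circuit: a capacitor $C$ in parallel with a flux-controlled memristor $q_M=\hat q(\varphi_M)$, connected to a series branch containing a resistor $R$, an inductor $L$ and a voltage-controlled voltage source of value $\mu v_C$, discretized with step size $h$. The quantity $q^0_{L,k}$ is the (discrete) incremental charge of the inductor. *)

(* Defs.v *)
From HB Require Import structures.
From mathcomp Require Import all_boot all_order all_algebra.
From mathcomp Require Import reals.
Set Implicit Arguments. Unset Strict Implicit. Unset Printing Implicit Defensive.
Import Order.TTheory GRing.Theory Num.Theory.
Local Open Scope ring_scope.

Section MLC.
Variable R : realType.

(* The three-dimensional discrete MLC map on states (v_C, i_L, phi_M).
   Rr is the resistance R of the paper. *)
Definition mlc_map (C L Rr mu h : R) (qhat : R -> R) (p : R * R * R)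
  : R * R * R :=
  let: (vC, iL, phi) := p in
  (vC - C^-1 * (qhat (phi + h * vC) - qhat phi) + h / C * iL,
   (1 - Rr * h / L) * iL + h / L * (mu - 1) * vC,
   phi + h * vC).

Definition is_orbit (F : R * R * R -> R * R * R) (x : nat -> R * R * R) : Prop :=
  forall k, x k.+1 = F (x k).

Definition Theta_MLC (C L Rr mu : R) (qhat : R -> R) (p : R * R * R) : R :=
  let: (vC, iL, phi) := p in
  C * vC + L * iL / Rr + qhat phi + (1 - mu) / Rr * phi.

Definition M_MLC (C L Rr mu : R) (qhat : R -> R) (Q0 : R) (p : R * R * R) : Prop :=
  Theta_MLC C L Rr mu qhat p = Q0.

Definition q0L (h : R) (iL : nat -> R) (k : nat) : R :=
  h * \sum_(0 <= j < k) iL j.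

Definition y_MLC (L Rr mu h : R) (iL phi : nat -> R) (k : nat) : R :=
  q0L h iL k + (mu - 1) / Rr * phi 0%N - L / Rr * iL 0%N.

End MLC.

(* Main.v *)
Require Import Defs.
From HB Require Import structures.
From mathcomp Require Import all_boot all_order all_algebra.
From mathcomp Require Import reals.
From mathcomp Require Import ring lra.
Import Order.TTheory GRing.Theory Num.Theory.
Local Open Scope ring_scope.

Theorem proposition3 (R : realType) (C L Rr mu h : R) (qhat : R -> R)
  (vC iC iL vL vR iR vM iM phiM : nat -> R) :
  0 < C -> 0 < L -> Rr != 0 -> 0 < h ->
  (forall k, iC k = C * (vC k.+1 - vC k) / h) ->
  (forall k, vL k = L * (iL k.+1 - iL k) / h) ->
  (forall k, vR k = Rr * iR k) ->
  (forall k, iM k = (qhat (phiM k.+1) - qhat (phiM k)) / h) ->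
  (forall k, phiM k.+1 = phiM k + h * vM k) ->
  (forall k, iL k = iM k + iC k) ->
  (forall k, iL k = iR k) ->
  (forall k, vC k + vR k + vL k - mu * vC k = 0) ->
  (forall k, vC k = vM k) ->
  (* 1) orbit of the 3D map *)
  is_orbit (mlc_map C L Rr mu h qhat) (fun k => (vC k, iL k, phiM k))
  /\
  (* 2) Theta_MLC is a first integral along every orbit *)
  (forall x : nat -> R * R * R, is_orbit (mlc_map C L Rr mu h qhat) x ->
     forall k, Theta_MLC C L Rr mu qhat (x k.+1) = Theta_MLC C L Rr mu qhat (x k))
  /\
  (* 3) foliation of R^3 into invariant level sets ... *)
  (forall p : R * R * R, exists! Q0 : R, M_MLC C L Rr mu qhat Q0 p)
  /\
  (forall (Q0 : R) (p : R * R * R), M_MLC C L Rr mu qhat Q0 p ->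
     M_MLC C L Rr mu qhat Q0 (mlc_map C L Rr mu h qhat p))
  /\
  (* ... and the reduced 2D map on each level set *)
  (forall (x : nat -> R * R * R) (Q0 : R),
     is_orbit (mlc_map C L Rr mu h qhat) x ->
     (forall k, M_MLC C L Rr mu qhat Q0 (x k)) ->
     let phi := fun k => (x k).2 in
     let i := fun k => (x k).1.2 in
     let y := y_MLC L Rr mu h i phi in
     forall k,
       phi k.+1 = phi k + h / C * y k - h / C * qhat (phi k) + h / C * Q0 /\
       y k.+1 = (1 - h * Rr / L) * y k + h / L * (mu - 1) * phi k).
Proof.
move=> C0 L0 R0 h0 H1 H2 H3 H4 H5 H6 H7 H8 H9.
have C0' : C != 0 by rewrite gt_eqF.
have L0' : L != 0 by rewrite gt_eqF.
have h0' : h != 0 by rewrite gt_eqF.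
have step : forall p, Theta_MLC C L Rr mu qhat (mlc_map C L Rr mu h qhat p)
                      = Theta_MLC C L Rr mu qhat p.
  case=> [[a b] c] /=; field; by rewrite ?C0' ?L0' ?h0' ?R0.
split.
  move=> k /=.
  have Ep : phiM k.+1 = phiM k + h * vC k by rewrite H5 H9.
  have Ev : vC k.+1 = vC k + h / C * iC k by rewrite H1; field; by rewrite ?C0' ?L0' ?h0' ?R0.
  have Ei : iL k.+1 = iL k + h / L * vL k by rewrite H2; field; by rewrite ?C0' ?L0' ?h0' ?R0.
  have E8 := H8 k.
  rewrite H3 -H7 H2 in E8.
  rewrite Ep Ev Ei.
  have -> : iC k = iL k - iM k by rewrite H6; ring.
  rewrite H4 Ep.
  have -> : vL k = (mu - 1) * vC k - Rr * iL k.
    rewrite H2; lra.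
  congr (_, _, _); field; by rewrite ?C0' ?L0' ?h0' ?R0.
split; first by move=> x Hx k; rewrite Hx step.
split; first by move=> p; exists (Theta_MLC C L Rr mu qhat p); split => // Q <-.
split; first by move=> Q0 p; rewrite /M_MLC step.
move=> x Q0 Hx HM phi i y.
have Hx' : forall k, x k.+1 = mlc_map C L Rr mu h qhat ((x k).1.1, (x k).1.2, (x k).2).
  by move=> k; rewrite Hx; case: (x k) => [[]].
have Ephi : forall k, phi k.+1 = phi k + h * (x k).1.1.
  by move=> k; rewrite /phi Hx' /=.
have Ei : forall k, i k.+1 = (1 - Rr * h / L) * i k + h / L * (mu - 1) * (x k).1.1.
  by move=> k; rewrite /i Hx' /=.
have Ey : forall k, y k.+1 = y k + h * i k.
  move=> k; rewrite /y /y_MLC /q0L big_nat_recr //=; ring.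
have Yk : forall k, y k = (mu - 1) / Rr * phi k - L / Rr * i k.
  elim=> [|k IH].
    by rewrite /y /y_MLC /q0L big_geq //= mulr0 add0r.
  rewrite Ey IH Ephi Ei; field; by rewrite ?C0' ?L0' ?h0' ?R0.
have Mk : forall k, C * (x k).1.1 + L * i k / Rr + qhat (phi k) + (1 - mu) / Rr * phi k = Q0.
  by move=> k; have := HM k; rewrite /M_MLC /i /phi; case: (x k) => [[]].
move=> k; split.
  rewrite Ephi Yk -(Mk k); field; by rewrite ?C0' ?L0' ?h0' ?R0.
rewrite Ey Yk; field; by rewrite ?C0' ?L0' ?h0' ?R0.
Qed.
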